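(* Let $m,n\ge0$ be integers and let $\lambda$ be an almost $(m|n)$-cross bipartition. (i) $|\lambda|=(m+1)(n+1)$. In particular, all almost $(m|n)$-cross bipartitions have the same size. (ii) For any integers $m',n'$ with $0\le m'\le m$ and $0\le n'\le n$, there exists an almost $(m'|n')$-cross bipartition $\mu$ with $\mu\subset\lambda$.
   Context: A partition is a weakly decreasing sequence $\alpha=(\alpha_1,\alpha_2,\dots)$ of nonnegative integers, almost all zero, with size $|\alpha|=\sum_i\alpha_i$. A bipartition is a pair $\lambda=(\lambda^\bullet,\lambda^\circ)$ of partitions, with size $|\lambda|=|\lambda^\bullet|+|\lambda^\circ|$. Containment is componentwise: $\mu\subset\lambda$ iff $\mu^\bullet_i\le\lambda^\bullet_i$ and $\mu^\circ_i\le\lambda^\circ_i$ for all $i$. A bipartition $\lambda$ is $(m|n)$-cross if there exists $k$ with $0\le k\le m$ such that $\lambda^\bullet_{k+1}+\lambda^\circ_{m-k+1}\le n$. It is almost $(m|n)$-cross if it is not $(m|n)$-cross but every bipartition strictly contained in it is $(m|n)$-cross. *)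

(* Defs.v *)
From mathcomp Require Import all_boot.
Set Implicit Arguments. Unset Strict Implicit. Unset Printing Implicit Defensive.

(* A partition is represented canonically by the (finite) sequence of its
   nonzero parts, weakly decreasing.  The i-th part (1-indexed) is [pt a i];
   all parts beyond the sequence are 0. *)
Definition is_partition (a : seq nat) : bool :=
  sorted geq a && all (fun x => 0 < x) a.

Definition pt (a : seq nat) (i : nat) : nat := nth 0 a i.-1.

Definition psize (a : seq nat) : nat := sumn a.

(* A bipartition lambda = (lambda^bullet, lambda^circ) = (l.1, l.2). *)
Definition bipartition := (seq nat * seq nat)%type.

Definition is_bipartition (l : bipartition) : bool :=
  is_partition l.1 && is_partition l.2.

Definition bsize (l : bipartition) : nat := psize l.1 + psize l.2.

Definition bcontained (mu l : bipartition) : Prop :=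
  forall i, 1 <= i -> pt mu.1 i <= pt l.1 i /\ pt mu.2 i <= pt l.2 i.

Definition cross (m n : nat) (l : bipartition) : Prop :=
  exists k, k <= m /\ pt l.1 k.+1 + pt l.2 (m - k).+1 <= n.

Definition almost_cross (m n : nat) (l : bipartition) : Prop :=
  ~ cross m n l /\
  forall mu, is_bipartition mu -> bcontained mu l -> mu <> l -> cross m n mu.

(* Main.v *)
Require Import Defs.
From mathcomp Require Import all_boot zify.
From Stdlib Require Import Classical.
Set Implicit Arguments. Unset Strict Implicit. Unset Printing Implicit Defensive.

Lemma geqT : transitive geq. Proof. by move=> a b c H1 H2; apply: leq_trans H2 H1. Qed.
Lemma geqR : reflexive geq. Proof. by move=> a; apply: leqnn. Qed.

Lemma pt_pos_size a i : is_partition a -> 1 <= i -> (0 < pt a i) = (i <= size a).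
Proof.
move=> /andP[_ Hp] Hi; rewrite /pt.
case: (ltnP i.-1 (size a)) => H.
- have: nth 0 a i.-1 \in a by apply: mem_nth.
  by move/(allP Hp) => ->; apply/esym; apply/leP; move/leP: H; lia.
- by rewrite nth_default //; apply/esym; apply/negbTE; rewrite -ltnNge; lia.
Qed.

Lemma pt_ext a b : is_partition a -> is_partition b ->
  (forall i, 1 <= i -> pt a i = pt b i) -> a = b.
Proof.
move=> Ha Hb H.
have Hs : size a = size b.
  apply/eqP; rewrite eqn_leq; apply/andP; split.
  - case: (posnP (size a)) => [->//|Hs].
    by rewrite -(pt_pos_size Hb) // -H // (pt_pos_size Ha).
  - case: (posnP (size b)) => [->//|Hs].
    by rewrite -(pt_pos_size Ha) // H // (pt_pos_size Hb).
apply: (eq_from_nth (x0 := 0) Hs) => i _.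
by have := H i.+1 isT; rewrite /pt.
Qed.

Lemma pt_mono a p q : is_partition a -> 1 <= p <= q -> pt a q <= pt a p.
Proof.
move=> /andP[Hs _] /andP[H1 H2]; rewrite /pt.
case: (ltnP q.-1 (size a)) => Hq; last by rewrite (nth_default _ Hq).
have := sorted_leq_nth geqT geqR 0 Hs.
move=> /(_ p.-1 q.-1); apply; rewrite ?inE //; lia.
Qed.

Definition mk (f : nat -> nat) N := filter (fun x => 0 < x) (map f (iota 1 N)).

Lemma nth_filter_pos s j : sorted geq s -> nth 0 (filter (fun x => 0 < x) s) j = nth 0 s j.
Proof.
elim: s j => [//|x s IH] j Hs /=.
have Hs' := path_sorted Hs.
case: (posnP x) => Hx.
- subst x; rewrite /=.
  have Hall := order_path_min geqT Hs.
  have -> : filter (fun x => 0 < x) s = [::].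
    apply/eqP; rewrite -(negbK (_ == _)) -has_filter; apply/hasPn => y /(allP Hall).
    by rewrite /= leqn0 => /eqP ->.
  case: j => [//|j] /=; rewrite ?nth_nil.
  case: (ltnP j (size s)) => Hj; last by rewrite nth_default.
  by have := allP Hall _ (mem_nth 0 Hj); rewrite /= leqn0 => /eqP ->.
- by rewrite ?Hx; case: j => [//|j] /=; apply: IH.
Qed.

Lemma mk_spec f N : (forall p q, 1 <= p <= q -> f q <= f p) ->
  (forall i, N < i -> f i = 0) ->
  is_partition (mk f N) /\ (forall i, 1 <= i -> pt (mk f N) i = f i).
Proof.
move=> Hm Hz.
have Hs : sorted geq (map f (iota 1 N)).
  apply/(sortedP 0) => i; rewrite size_map size_iota => Hi.
  rewrite (nth_map 0) ?size_iota; last lia. rewrite (nth_map 0) ?size_iota; last lia.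
  rewrite !nth_iota; try lia.
  apply: Hm; lia.
split.
- apply/andP; split; first exact: sorted_filter geqT _ _ Hs.
  exact: filter_all.
- move=> i Hi; rewrite /pt nth_filter_pos //.
  case: (ltnP i.-1 N) => H.
  + by rewrite (nth_map 0) ?size_iota // nth_iota //; congr f; lia.
  + rewrite nth_default ?size_map ?size_iota //; rewrite Hz //; lia.
Qed.

Lemma pt0 a i : is_partition a -> size a < i -> pt a i = 0.
Proof. by move=> _ H; rewrite /pt nth_default //; lia. Qed.

Lemma remove_box a i : is_partition a -> 1 <= i -> pt a i.+1 < pt a i ->
  exists a', is_partition a' /\ pt a' i = pt a i - 1 /\
    (forall j, 1 <= j -> j != i -> pt a' j = pt a j).
Proof.
move=> Ha Hi Hc.
pose f j := if j == i then pt a i - 1 else pt a j.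
have [Hp Hpt] : is_partition (mk f (size a)) /\ (forall j, 1 <= j -> pt (mk f (size a)) j = f j).
  apply: mk_spec.
- move=> p q /andP[H1 H2]; rewrite /f.
  case: eqP => Hq; case: eqP => Hp.
  + subst; lia.
  + subst q; have := pt_mono Ha (p:=p) (q:=i); lia.
  + subst p. have := pt_mono Ha (p:=i.+1) (q:=q). lia.
  + by apply: pt_mono => //; rewrite H1 H2.
- move=> j Hj; rewrite /f; case: eqP => [E|_]; last exact: pt0.
  by subst j; rewrite (pt0 Ha Hj).
exists (mk f (size a)); split=> //; split.
- by rewrite Hpt // /f eqxx.
- by move=> j Hj Hne; rewrite Hpt // /f (negbTE Hne).
Qed.

Lemma not_cross m n l : ~ cross m n l -> forall k, k <= m ->
  n < pt l.1 k.+1 + pt l.2 (m - k).+1.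
Proof.
move=> H k Hk; rewrite ltnNge; apply/negP => H'; apply: H; by exists k.
Qed.

Lemma corner_a m n l i : is_bipartition l -> almost_cross m n l -> 1 <= i ->
  pt l.1 i.+1 < pt l.1 i ->
  exists k, k <= m /\ k.+1 = i /\ pt l.1 k.+1 + pt l.2 (m - k).+1 = n.+1.
Proof.
case: l => a b /andP[/= Ha Hb] [Hnc Hmin] Hi Hc.
have [a' [Ha' [H1 H2]]] := remove_box Ha Hi Hc.
have Hcr : cross m n (a', b).
  apply: Hmin.
  - by rewrite /is_bipartition Ha' Hb.
  - move=> j Hj /=; split=> //; case: (eqVneq j i) => [->|Hne]; first lia.
    by rewrite H2.
  - by case=> E; move: H1; rewrite E; lia.
case: Hcr => k [Hk /= Hs].
have := not_cross Hnc Hk => /= Hl.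
case: (eqVneq k.+1 i) => E.
- exists k; split=> //; split=> //; move: Hs Hl; rewrite E H1; lia.
- by move: Hs; rewrite H2 //; lia.
Qed.

Lemma corner_b m n l i : is_bipartition l -> almost_cross m n l -> 1 <= i ->
  pt l.2 i.+1 < pt l.2 i ->
  exists k, k <= m /\ (m - k).+1 = i /\ pt l.1 k.+1 + pt l.2 (m - k).+1 = n.+1.
Proof.
case: l => a b /andP[/= Ha Hb] [Hnc Hmin] Hi Hc.
have [b' [Hb' [H1 H2]]] := remove_box Hb Hi Hc.
have Hcr : cross m n (a, b').
  apply: Hmin.
  - by rewrite /is_bipartition Ha Hb'.
  - move=> j Hj /=; split=> //; case: (eqVneq j i) => [->|Hne]; first lia.
    by rewrite H2.
  - by case=> E; move: H1; rewrite E; lia.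
case: Hcr => k [Hk /= Hs].
have := not_cross Hnc Hk => /= Hl.
case: (eqVneq (m - k).+1 i) => E.
- exists k; split=> //; split=> //; move: Hs Hl; rewrite E H1; lia.
- by move: Hs; rewrite H2 //; lia.
Qed.

Definition Cc m n (l : bipartition) :=
  (forall i, m.+1 < i -> pt l.1 i = 0) /\ (forall i, m.+1 < i -> pt l.2 i = 0) /\
  (forall k, k <= m -> pt l.1 k.+1 + pt l.2 (m - k).+1 = n.+1).

Lemma almost_C m n l : is_bipartition l -> almost_cross m n l -> Cc m n l.
Proof.
move=> Hl Hac.
have /andP[Ha Hb] := Hl.
have P1 : forall i, m.+1 < i -> pt l.1 i = 0.
  move=> i Hi; case: (posnP (pt l.1 i)) => // Hp.
  have Hs : i <= size l.1 by rewrite -(pt_pos_size Ha) //; lia.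
  have Hs1 : pt l.1 (size l.1).+1 < pt l.1 (size l.1).
    rewrite (pt0 Ha (ltnSn _)) (pt_pos_size Ha) //; lia.
  have [k [Hk [E _]]] := corner_a (i := size l.1) Hl Hac (ltac:(lia)) Hs1.
  lia.
have P2 : forall i, m.+1 < i -> pt l.2 i = 0.
  move=> i Hi; case: (posnP (pt l.2 i)) => // Hp.
  have Hs : i <= size l.2 by rewrite -(pt_pos_size Hb) //; lia.
  have Hs1 : pt l.2 (size l.2).+1 < pt l.2 (size l.2).
    rewrite (pt0 Hb (ltnSn _)) (pt_pos_size Hb) //; lia.
  have [k [Hk [E _]]] := corner_b (i := size l.2) Hl Hac (ltac:(lia)) Hs1.
  lia.
have PA : forall t k, k + t = m -> 0 < pt l.1 k.+1 ->
    pt l.1 k.+1 + pt l.2 (m - k).+1 <= n.+1.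
  elim=> [|t IH] k Hkt Hp.
  - have Hc : pt l.1 k.+2 < pt l.1 k.+1 by rewrite P1 //; lia.
    have [k' [Hk' [E S]]] := corner_a Hl Hac (ltn0Sn _) Hc.
    have Ek : k' = k by lia.
    by rewrite -Ek S.
  - case: (ltnP (pt l.1 k.+2) (pt l.1 k.+1)) => Hc.
    + have [k' [Hk' [E S]]] := corner_a Hl Hac (ltn0Sn _) Hc.
      have Ek : k' = k by lia.
      by rewrite -Ek S.
    + have Hm := pt_mono Ha (p := k.+1) (q := k.+2) (ltac:(lia)).
      have := IH k.+1 (ltac:(lia)) (ltac:(lia)).
      have := pt_mono Hb (p := (m - k.+1).+1) (q := (m - k).+1) (ltac:(lia)).
      lia.
have PB : forall k, k <= m -> 0 < pt l.2 (m - k).+1 ->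
    pt l.1 k.+1 + pt l.2 (m - k).+1 <= n.+1.
  elim=> [|k IH] Hk Hp.
  - have Hc : pt l.2 (m - 0).+2 < pt l.2 (m - 0).+1 by rewrite P2 //; lia.
    have [k' [Hk' [E S]]] := corner_b Hl Hac (ltn0Sn _) Hc.
    have Ek : k' = 0 by lia.
    by rewrite -Ek S.
  - case: (ltnP (pt l.2 (m - k.+1).+2) (pt l.2 (m - k.+1).+1)) => Hc.
    + have [k' [Hk' [E S]]] := corner_b Hl Hac (ltn0Sn _) Hc.
      have Ek : k' = k.+1 by lia.
      by rewrite -Ek S.
    + have Hm := pt_mono Hb (p := (m - k.+1).+1) (q := (m - k.+1).+2) (ltac:(lia)).
      have E2 : (m - k.+1).+2 = (m - k).+1 by lia.
      rewrite E2 in Hm Hc.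
      have := IH (ltac:(lia)) (ltac:(lia)).
      have := pt_mono Ha (p := k.+1) (q := k.+2) (ltac:(lia)).
      lia.
split=> //; split=> // k Hk.
have Hnc := not_cross Hac.1 Hk.
case: (posnP (pt l.1 k.+1)) => Hp.
- have := PB k Hk (ltac:(lia)); lia.
- have := PA (m - k) k (ltac:(lia)) Hp; lia.
Qed.

Lemma C_almost m n l : is_bipartition l -> Cc m n l -> almost_cross m n l.
Proof.
move=> Hl [P1 [P2 P3]]; split.
- by case=> k [Hk]; rewrite P3 //; lia.
- move=> mu Hmu Hsub Hne.
  apply: NNPP => Hnc; apply: Hne.
  have /andP[Ha Hb] := Hl; have /andP[Hma Hmb] := Hmu.
  have E1 : forall i, 1 <= i -> pt mu.1 i = pt l.1 i.
    move=> i Hi; have [S1 _] := Hsub i Hi.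
    case: (ltnP m.+1 i) => Hi2; first by move: S1; rewrite P1 //; lia.
    have := not_cross Hnc (k := i.-1) (ltac:(lia)).
    have [_ S2] := Hsub (m - i.-1).+1 isT.
    have := P3 i.-1 (ltac:(lia)).
    have -> : i.-1.+1 = i by lia.
    lia.
  have E2 : forall i, 1 <= i -> pt mu.2 i = pt l.2 i.
    move=> i Hi; have [_ S1] := Hsub i Hi.
    case: (ltnP m.+1 i) => Hi2; first by move: S1; rewrite P2 //; lia.
    have := not_cross Hnc (k := m - i.-1) (ltac:(lia)).
    have [S2 _] := Hsub (m - i.-1).+1 isT.
    have := P3 (m - i.-1) (ltac:(lia)).
    have -> : (m - (m - i.-1)).+1 = i by lia.
    lia.
  clear Hnc. case: mu Hmu Hsub Hma Hmb E1 E2 => a b /= _ _ Hma Hmb E1 E2.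
  case: l Hl P1 P2 P3 Ha Hb E1 E2 => a' b' /= _ _ _ _ Ha Hb E1 E2.
  by rewrite (pt_ext Hma Ha E1) (pt_ext Hmb Hb E2).
Qed.

Lemma sumn_nth (a : seq nat) N : size a <= N -> sumn a = \sum_(j < N) nth 0 a j.
Proof.
elim: a N => [|x a IH] N /=.
- by move=> _; rewrite big1 // => j _; rewrite nth_nil.
- case: N => [//|N] H; rewrite big_ord_recl /= (IH N) //.
Qed.

Lemma size_le a m : is_partition a -> (forall i, m.+1 < i -> pt a i = 0) -> size a <= m.+1.
Proof.
move=> Ha P; rewrite leqNgt; apply/negP => H.
have := P _ H; have := pt_pos_size Ha (i := size a) (ltac:(lia)); rewrite leqnn; lia.
Qed.

Theorem proposition2p6 (m n : nat) (l : bipartition) :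
  is_bipartition l -> almost_cross m n l ->
  bsize l = (m + 1) * (n + 1) /\
  (forall m' n', m' <= m -> n' <= n ->
     exists mu, is_bipartition mu /\ bcontained mu l /\ almost_cross m' n' mu).
Proof.
move=> Hl Hac.
have [P1 [P2 P3]] := almost_C Hl Hac.
have /andP[Ha Hb] := Hl.
split.
- rewrite /bsize /psize (sumn_nth (size_le Ha P1)) (sumn_nth (size_le Hb P2)).
  rewrite [X in _ + X = _](reindex_inj rev_ord_inj) -big_split /=.
  rewrite (eq_bigr (fun _ => n.+1)).
  + by rewrite sum_nat_const card_ord; lia.
  + move=> j _; have := P3 j (ltac:(case: j => /= j; lia)).
    by rewrite /pt /= subSS.
- move=> m' n' Hm' Hn'.
  pose f1 i := if i <= m'.+1 then minn (pt l.1 i) n'.+1 else 0.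
  pose f2 j := if j <= m'.+1 then n'.+1 - pt l.1 (m'.+2 - j) else 0.
  have [Q1 R1] : is_partition (mk f1 m'.+1) /\ (forall j, 1 <= j -> pt (mk f1 m'.+1) j = f1 j).
    apply: mk_spec.
    + move=> p q /andP[H1 H2]; rewrite /f1.
      have := pt_mono Ha (p := p) (q := q) (ltac:(lia)).
      case: ifP => Hq; case: ifP => Hp; lia.
    + by move=> i Hi; rewrite /f1 ifN //; lia.
  have [Q2 R2] : is_partition (mk f2 m'.+1) /\ (forall j, 1 <= j -> pt (mk f2 m'.+1) j = f2 j).
    apply: mk_spec.
    + move=> p q /andP[H1 H2]; rewrite /f2.
      case: ifP => Hq; case: ifP => Hp; try lia.
      have := pt_mono Ha (p := m'.+2 - q) (q := m'.+2 - p) (ltac:(lia)); lia.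
    + by move=> i Hi; rewrite /f2 ifN //; lia.
  exists (mk f1 m'.+1, mk f2 m'.+1); split; first by rewrite /is_bipartition Q1 Q2.
  split.
  + move=> i Hi /=; rewrite R1 // R2 //; split.
    * rewrite /f1; case: ifP => _; lia.
    * rewrite /f2; case: ifP => Hi2; last lia.
      have := P3 (m'.+1 - i) (ltac:(lia)).
      have E : (m'.+1 - i).+1 = m'.+2 - i by lia.
      rewrite E.
      have := pt_mono Hb (p := i) (q := (m - (m'.+1 - i)).+1) (ltac:(lia)); lia.
  + apply: C_almost; first by rewrite /is_bipartition Q1 Q2.
    split; [|split].
    * move=> i Hi /=; rewrite R1; last lia. by rewrite /f1 ifN //; lia.
    * move=> i Hi /=; rewrite R2; last lia. by rewrite /f2 ifN //; lia.
    * move=> k Hk /=; rewrite R1 // R2 // /f1 /f2 !ifT; try lia.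
      have E : m'.+2 - (m' - k).+1 = k.+1 by lia.
      rewrite E; lia.
Qed.
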